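(* Let $\mathcal C=\{\hat\mu_1,\dots,\hat\mu_{k'}\}\subset\mathbb{R}^n$ with Voronoi partition $V_1,\dots,V_{k'}$, let $\sigma>0$, $R\ge0$, $\epsilon\in(0,1)$, and let $\mu\in\mathbb{R}^n$ satisfy $\|\mu-\hat\mu_i\|\le R$ for some $i$. Let $Y=\mu+\sigma\xi$ with $\xi\sim\mathcal N(0,I_n)$, and let $i'$ be the (random) index with $Y\in V_{i'}$. Then with probability at least $1-\epsilon$, $$\|\mu-\hat\mu_{i'}\|\le3R+2\sqrt2\,\sigma\sqrt{\ln(k'/\epsilon)}.$$
   Context: The Voronoi partition of $\{\hat\mu_1,\dots,\hat\mu_{k'}\}$ is $V_j=\{x:\|x-\hat\mu_j\|=\min_{j'}\|x-\hat\mu_{j'}\|\}$, with ties (a null set) broken arbitrarily so that the $V_j$ partition $\mathbb{R}^n$. *)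

(* Defs.v *)
From HB Require Import structures.
From mathcomp Require Import all_boot all_order all_algebra.
From mathcomp Require Import all_classical all_reals all_analysis.
Set Implicit Arguments. Unset Strict Implicit. Unset Printing Implicit Defensive.
Import Order.TTheory GRing.Theory Num.Theory.
Local Open Scope classical_set_scope.
Local Open Scope ring_scope.

Definition enorm {R : realType} {n : nat} (v : 'I_n -> R) : R :=
  Num.sqrt (\sum_(i < n) v i ^+ 2).

(* cell is a Voronoi assignment for the centers C: x lies in V_(cell x),
   i.e. C (cell x) is a nearest center to x (ties broken arbitrarily). *)
Definition voronoi_assignment {R : realType} {n k : nat}
  (C : 'I_k -> ('I_n -> R)) (cell : ('I_n -> R) -> 'I_k) : Prop :=
  forall x j, enorm (fun t => x t - C (cell x) t) <= enorm (fun t => x t - C j t).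

Definition mutually_independent_RVs {R : realType} (d : measure_display)
  (T : measurableType d) (P : probability T R) (n : nat)
  (X : 'I_n -> {RV P >-> R}) : Prop :=
  forall B : 'I_n -> set R, (forall i, measurable (B i)) ->
    P (\bigcap_(i in [set: 'I_n]) (X i @^-1` B i)) =
    (\prod_(i < n) P (X i @^-1` B i))%E.

Definition std_gaussian_vector {R : realType} (d : measure_display)
  (T : measurableType d) (P : probability T R) (n : nat)
  (xi : 'I_n -> {RV P >-> R}) : Prop :=
  (forall i (A : set R), measurable A ->
     distribution P (xi i) A = normal_prob 0 1 A) /\
  mutually_independent_RVs xi.

(* Main.v *)
Require Import Defs.
From HB Require Import structures.
From mathcomp Require Import all_boot all_order all_algebra.
From mathcomp Require Import all_classical all_reals all_analysis.
From mathcomp Require Import measurable_realfun normal_distribution.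
From mathcomp Require Import ring lra.
Set Implicit Arguments. Unset Strict Implicit. Unset Printing Implicit Defensive.
Import Order.TTheory GRing.Theory Num.Theory.
Import numFieldNormedType.Exports.
Local Open Scope classical_set_scope.
Local Open Scope ring_scope.

Section key.
Context (R : realType) (dT : measure_display) (T : measurableType dT).
Context (dY : measure_display) (Y : measurableType dY).
Variables (mu : {measure set T -> \bar R}) (X : T -> Y) (g : T -> R).
Variables (nu : {measure set Y -> \bar R}) (c : R).
Hypotheses (mX : measurable_fun setT X) (g0 : forall w, 0 <= g w)
  (mg : measurable_fun setT g) (c0 : 0 <= c).
Hypothesis H : forall A, measurable A ->
  (\int[mu]_w (\1_A (X w) * g w)%:E = c%:E * nu A)%E.

Import HBNNSimple.

Lemma key_simple (h : {nnsfun Y >-> R}) :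
  (\int[mu]_w (h (X w) * g w)%:E = \int[nu]_y (c * h y)%:E)%E.
Proof.
under [RHS]eq_integral do rewrite EFinM.
rewrite ge0_integralZl_EFin//; last first.
  by apply/measurable_EFinP.
  by move=> y _; rewrite lee_fin.
rewrite integralT_nnsfun sintegralE.
have fr : finite_set (range h) by exact: fimfunP.
under eq_integral => w _.
  rewrite EFinM (fimfunE h (X w)) -fsumEFin// ge0_mule_fsuml; last first.
    by move=> r; apply: nnfun_muleindic_ge0.
  over.
rewrite ge0_integral_fsum//; last 2 first.
  - move=> r; apply/measurable_EFinP; apply: measurable_funM => //.
    apply: measurable_funM => //; apply: measurableT_comp => //.
  - by move=> r w _; apply: mule_ge0; [exact: nnfun_muleindic_ge0|rewrite lee_fin].
rewrite ge0_mule_fsumr; last by move=> r; exact: nnsfun_mulemu_ge0.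
apply: eq_fsbigr => r rh.
have r0 : (0 <= r)%R by move: rh; rewrite inE => -[t _ <-].
under eq_integral do rewrite -EFinM -mulrA EFinM.
rewrite ge0_integralZl_EFin//; last 2 first.
  - move=> w _; rewrite lee_fin mulr_ge0//.
  - apply/measurable_EFinP; apply: measurable_funM => //; apply: measurableT_comp => //.
rewrite H//.
by rewrite muleCA.
Qed.

Lemma key (f : Y -> R) : (forall y, 0 <= f y) -> measurable_fun setT f ->
  (\int[mu]_w (f (X w) * g w)%:E = \int[nu]_y (c * f y)%:E)%E.
Proof.
move=> f0 mf.
have mf' : measurable_fun setT (EFin \o f) by exact/measurable_EFinP.
pose h := nnsfun_approx measurableT mf'.
have hc y : (EFin \o h^~ y) @ \oo --> (f y)%:E.
  have f0' : forall x, setT x -> (0 <= (EFin \o f) x)%E by move=> x _; rewrite lee_fin.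
  exact: (cvg_nnsfun_approx measurableT mf' f0' (I : setT y)).
have nd : forall y, {homo (fun n => h n y) : a b / (a <= b)%N >-> a <= b}.
  by move=> y a b ab; exact/lefP/nd_nnsfun_approx.
transitivity (\int[mu]_w limn (fun n => (h n (X w) * g w)%:E))%E.
  apply: eq_integral => w _; apply/esym/cvg_lim => //.
  rewrite EFinM; under eq_fun do rewrite EFinM.
  by apply: cvgeZr => //; exact: hc.
transitivity (\int[nu]_y limn (fun n => (c * h n y)%:E))%E; last first.
  apply: eq_integral => y _; apply/cvg_lim => //.
  rewrite EFinM; under eq_fun do rewrite EFinM.
  by apply: cvgeZl => //; exact: hc.
rewrite monotone_convergence//; last 3 first.
- move=> n; apply/measurable_EFinP; apply: measurable_funM => //.
  by apply: measurableT_comp => //.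
- by move=> n w _; rewrite lee_fin mulr_ge0.
- by move=> w _ a b ab; rewrite lee_fin ler_wpM2r// nd.
rewrite monotone_convergence//; last 3 first.
- by move=> n; apply/measurable_EFinP; apply: measurable_funM.
- by move=> n w _; rewrite lee_fin mulr_ge0.
- by move=> w _ a b ab; rewrite lee_fin ler_wpM2l// nd.
by congr (limn _); apply/funext => n; exact: key_simple.
Qed.
End key.

Section mgf.
Context (R : realType).
Notation leb := (@lebesgue_measure R).

Lemma normal_intE (f : R -> R) : (forall y, 0 <= f y) -> measurable_fun setT f ->
  (\int[normal_prob 0 1]_y (f y)%:E = \int[leb]_y (f y * normal_pdf 0 1 y)%:E)%E.
Proof.
move=> f0 mf.
rewrite (@key R _ _ _ _ leb id (normal_pdf 0 1) (@normal_prob R 0 1) 1)//.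
- by apply: eq_integral => y _; rewrite mul1r.
- exact: normal_pdf_ge0.
- exact: measurable_normal_pdf.
- move=> A mA; rewrite mul1e /normal_prob [RHS]integral_mkcond.
  apply: eq_integral => y _; rewrite epatch_indic /= -EFinM mulrC.
  by [].
Qed.

Lemma normal_mgf (a : R) :
  (\int[normal_prob 0 1]_y (expR (a * y))%:E = (expR (a ^+ 2 / 2))%:E)%E.
Proof.
rewrite normal_intE//.
transitivity (\int[leb]_y ((expR (a ^+ 2 / 2))%:E * (normal_pdf a 1 y)%:E))%E.
  apply: eq_integral => y _; rewrite -EFinM; congr EFin.
  rewrite /normal_pdf oner_eq0 /= /normal_fun.
  rewrite mulrCA -expRD mulrCA -expRD; congr (_ * expR _).
  by rewrite expr1n; field.
transitivity ((expR (a ^+ 2 / 2))%:E * \int[leb]_y (normal_pdf a 1 y)%:E)%E.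
  apply: ge0_integralZl_EFin => //.
  - by move=> y _; rewrite lee_fin normal_pdf_ge0.
  - by apply/measurable_EFinP; exact: measurable_normal_pdf.
by rewrite integral_normal_pdf mule1.
by apply: measurableT_comp => //; exact: measurable_funM.
Qed.
End mgf.

Section indep.
Context (R : realType) (d : measure_display) (T : measurableType d).
Variables (P : probability T R) (n : nat) (xi : 'I_n -> {RV P >-> R}).
Hypothesis Hg : std_gaussian_vector xi.
Variable a : 'I_n -> R.

Definition Hfac (m : nat) (B : 'I_n -> set R) (i : 'I_n) (w : T) : R :=
  if (i < m)%N then expR (a i * xi i w) else \1_(B i) (xi i w).
Definition Cfac (m : nat) (B : 'I_n -> set R) (i : 'I_n) : R :=
  if (i < m)%N then expR (a i ^+ 2 / 2) else fine (P (xi i @^-1` B i)).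

Lemma Hfac_ge0 m B i w : 0 <= Hfac m B i w.
Proof. by rewrite /Hfac; case: ifP => _; [exact: expR_ge0|by rewrite indicE]. Qed.

Lemma Hfac_meas m B i : measurable (B i) -> measurable_fun setT (Hfac m B i).
Proof.
move=> mB; rewrite /Hfac; case: (i < m)%N.
  by apply: measurableT_comp => //; apply: measurable_funM.
by apply: measurableT_comp => //; exact: measurable_indic.
Qed.

Lemma prod_meas (p : pred 'I_n) (F : 'I_n -> T -> R) :
  (forall i, measurable_fun setT (F i)) ->
  measurable_fun setT (fun w => \prod_(i | p i) F i w).
Proof.
move=> mF; under eq_fun do rewrite big_mkcond /=.
rewrite -/(index_enum _).
apply: measurable_prod => i _; case: (p i) => //.
Qed.

Lemma indep_base B : (forall i, measurable (B i)) ->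
  (\int[P]_w (\prod_i Hfac 0 B i w)%:E = (\prod_i Cfac 0 B i)%:E)%E.
Proof.
move=> mB.
have mI : measurable (\bigcap_(i in [set: 'I_n]) (xi i @^-1` B i)).
  apply: fin_bigcap_measurable => [|i _]; first exact: finite_finset.
  by rewrite -[_ @^-1` _]setTI; exact: measurable_funP.
transitivity (\int[P]_w (\1_(\bigcap_(i in [set: 'I_n]) (xi i @^-1` B i)) w)%:E)%E.
  apply: eq_integral => w _; congr EFin; rewrite /Hfac /=.
  have [allin|] := pselect (forall i, B i (xi i w)).
    rewrite indicE mem_set; last by move=> i _; exact: allin.
    by apply: big1 => i _; rewrite indicE mem_set.
  move=> /existsNP[i ni].
  rewrite indicE memNset; last by move=> H; apply: ni; exact: H.
  by rewrite (bigD1 i)//= indicE memNset// mul0r.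
rewrite integral_indic// setIT. apply: eq_trans (proj2 Hg B mB) _.
rewrite -prodEFin; apply: eq_bigr => i _; rewrite /Cfac /=.
rewrite fineK// fin_num_measure//.
by rewrite -[_ @^-1` _]setTI; exact: measurable_funP.
Qed.

Lemma Cfac_ge0 m B i : 0 <= Cfac m B i.
Proof. by rewrite /Cfac; case: ifP => _; [exact: expR_ge0|exact: fine_ge0]. Qed.

Lemma indep_all m : (m <= n)%N -> forall B, (forall i, measurable (B i)) ->
  (\int[P]_w (\prod_i Hfac m B i w)%:E = (\prod_i Cfac m B i)%:E)%E.
Proof.
elim: m => [_|m IH lemn] B mB; first exact: indep_base.
pose m' : 'I_n := Ordinal lemn.
have neq i : i != m' -> (i : nat) != m.
  by apply: contra => /eqP h; apply/eqP/val_inj.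
have Hne i B0 w : i != m' -> Hfac m.+1 B0 i w = Hfac m B0 i w.
  by move=> im; rewrite /Hfac ltnS leq_eqVlt (negbTE (neq i im)).
have Cne i B0 : i != m' -> Cfac m.+1 B0 i = Cfac m B0 i.
  by move=> im; rewrite /Cfac ltnS leq_eqVlt (negbTE (neq i im)).
have Hm B0 w : Hfac m.+1 B0 m' w = expR (a m' * xi m' w) by rewrite /Hfac ltnSn.
have Hm0 B0 w : Hfac m B0 m' w = \1_(B0 m') (xi m' w) by rewrite /Hfac ltnn.
pose G w := \prod_(i | i != m') Hfac m.+1 B i w.
pose c := \prod_(i | i != m') Cfac m.+1 B i.
have c0 : 0 <= c by apply: prodr_ge0 => i _; exact: Cfac_ge0.
have G0 w : 0 <= G w by apply: prodr_ge0 => i _; exact: Hfac_ge0.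
have mG : measurable_fun setT G by apply: prod_meas => i; exact: Hfac_meas.
have HA : forall A, measurable A ->
    (\int[P]_w (\1_A (xi m' w) * G w)%:E = c%:E * normal_prob 0 1 A)%E.
  move=> A mA; pose B' := fun i => if i == m' then A else B i.
  have mB' : forall i, measurable (B' i) by move=> i; rewrite /B'; case: ifP.
  transitivity (\int[P]_w (\prod_i Hfac m B' i w)%:E)%E.
    apply: eq_integral => w _; congr EFin.
    rewrite [RHS](bigD1 m')//= Hm0 /B' eqxx; congr (_ * _).
    by apply: eq_bigr => i im; rewrite Hne// /Hfac (negbTE im).
  rewrite IH ?(ltnW lemn)//.
  rewrite (bigD1 m')//= EFinM muleC; congr (_ * _)%E.
    congr EFin; apply: eq_bigr => i im.
    by rewrite Cne// /Cfac /B' (negbTE im).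
  rewrite /Cfac ltnn /B' eqxx fineK; last first.
    by rewrite fin_num_measure// -[_ @^-1` _]setTI; exact: measurable_funP.
  exact: (proj1 Hg m' A mA).
transitivity (\int[P]_w (expR (a m' * xi m' w) * G w)%:E)%E.
  by apply: eq_integral => w _; rewrite (bigD1 m')//= Hm.
rewrite (@key R d T _ (g_sigma_algebraType R.-ocitv.-measurable) P (xi m') G (@normal_prob R 0 1) c _ G0 mG c0 HA
  (fun y => expR (a m' * y))); last 2 first.
- by move=> y; exact: expR_ge0.
- by apply: measurableT_comp => //; exact: measurable_funM.
transitivity (c%:E * \int[normal_prob 0 1]_y (expR (a m' * y))%:E)%E.
  under eq_integral do rewrite EFinM.
  apply: ge0_integralZl_EFin => //.
  all: try by move=> *; rewrite lee_fin expR_ge0.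
  all: try by apply/measurable_EFinP; apply: measurableT_comp => //; exact: measurable_funM.
rewrite normal_mgf [in RHS](bigD1 m')//= EFinM muleC; congr (_ * _)%E.
by rewrite /Cfac ltnSn.
Qed.

Lemma indep_exp :
  (\int[P]_w (expR (\sum_i a i * xi i w))%:E = (expR (\sum_i a i ^+ 2 / 2))%:E)%E.
Proof.
have H := indep_all (leqnn n) (fun=> measurableT).
transitivity (\int[P]_w (\prod_i Hfac n (fun=> setT) i w)%:E)%E.
  apply: eq_integral => w _; rewrite expR_sum; congr EFin.
  by apply: eq_bigr => i _; rewrite /Hfac ltn_ord.
rewrite H expR_sum; congr EFin.
by apply: eq_bigr => i _; rewrite /Cfac ltn_ord.
Qed.
End indep.

Section tail.
Context (R : realType) (d : measure_display) (T : measurableType d).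
Variables (P : probability T R) (n : nat) (xi : 'I_n -> {RV P >-> R}).
Hypothesis Hg : std_gaussian_vector xi.

Definition lin (u : 'I_n -> R) (w : T) : R := \sum_i u i * xi i w.

Lemma meas_lin (u : 'I_n -> R) : measurable_fun setT (lin u).
Proof.
rewrite /lin.
apply: measurable_sum => i _; exact: measurable_funM.
Qed.

Lemma tail_bound (u : 'I_n -> R) (t : R) : 0 <= t -> \sum_i u i ^+ 2 <= 1 ->
  (P (~` (lin u @^-1` `]-oo, t])) <= (expR (- (t ^+ 2 / 2)))%:E)%E.
Proof.
move=> t0 u1.
set S := lin u.
have mS : measurable_fun setT S by exact: meas_lin.
have mF : measurable (~` (S @^-1` `]-oo, t])).
  apply: measurableC; rewrite -[_ @^-1` _]setTI; apply: mS => //.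
have -> : P (~` (S @^-1` `]-oo, t])) =
    (\int[P]_w (\1_(~` (S @^-1` `]-oo, t])) w)%:E)%E.
  by rewrite integral_indic// setIT.
pose a := fun i => t * u i.
have HE := indep_exp Hg a.
apply: (@le_trans _ _ (\int[P]_w ((expR (- t ^+ 2))%:E * (expR (\sum_i a i * xi i w))%:E))%E).
  apply: ge0_le_integral => //.
  - by apply/measurable_EFinP; exact: measurable_indic.
  - apply/measurable_EFinP => /=; apply: measurable_funM => //.
    by apply: measurableT_comp => //; exact: meas_lin.
  move=> w _; rewrite -EFinM lee_fin -expRD indicE.
  case: (boolP (w \in _)) => [/set_mem|] wF /=; last exact: expR_ge0.
  have : t < S w.
    by move: wF => /=; rewrite /preimage /= in_itv /= => /negP; rewrite -ltNge.
  move=> tS; rewrite -[1]expR0 ler_expR.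
  have -> : \sum_i a i * xi i w = t * S w.
    by rewrite /S /lin mulr_sumr; apply: eq_bigr => i _; rewrite /a mulrA.
  by rewrite addrC subr_ge0 expr2 ler_wpM2l// ltW.
have -> : (\int[P]_w ((expR (- t ^+ 2))%:E * (expR (\sum_i a i * xi i w))%:E) =
    (expR (- t ^+ 2))%:E * \int[P]_w (expR (\sum_i a i * xi i w))%:E)%E.
  apply: ge0_integralZl_EFin => //.
  all: try by move=> *; rewrite lee_fin expR_ge0.
  all: try exact: expR_ge0.
  by apply/measurable_EFinP; apply: measurableT_comp => //; exact: meas_lin.
rewrite HE -EFinM lee_fin -expRD ler_expR.
have -> : \sum_i a i ^+ 2 / 2 = t ^+ 2 / 2 * \sum_i u i ^+ 2.
  by rewrite mulr_sumr; apply: eq_bigr => i _; rewrite /a exprMn; field.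
have := sqr_ge0 t; nra.
Qed.
End tail.

Section geom.
Context (R : realType) (n : nat).
Implicit Types a b : 'I_n -> R.

Lemma sumsq_ge0 a : 0 <= \sum_i a i ^+ 2.
Proof. by apply: sumr_ge0 => i _; exact: sqr_ge0. Qed.

Lemma enorm_ge0 a : 0 <= enorm a.
Proof. exact: sqrtr_ge0. Qed.

Lemma enorm_sq a : enorm a ^+ 2 = \sum_i a i ^+ 2.
Proof. by rewrite /enorm sqr_sqrtr// sumsq_ge0. Qed.

Lemma enorm0 a : enorm a = 0 -> forall i, a i = 0.
Proof.
move=> /eqP; rewrite sqrtr_eq0 => h i.
have h0 : \sum_i a i ^+ 2 = 0 by apply/eqP; rewrite eq_le h sumsq_ge0.
have := psumr_eq0P (fun i _ => sqr_ge0 (a i)) h0 (i := i) isT.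
by move/eqP; rewrite sqrf_eq0 => /eqP.
Qed.

Lemma cs a b : \sum_i a i * b i <= enorm a * enorm b.
Proof.
set A := \sum_i a i ^+ 2; set B := \sum_i b i ^+ 2; set X := \sum_i a i * b i.
have A0 : 0 <= A by exact: sumsq_ge0.
have B0 : 0 <= B by exact: sumsq_ge0.
have quad l : 0 <= l ^+ 2 * A - 2 * l * X + B.
  have : 0 <= \sum_i (l * a i - b i) ^+ 2 by exact: sumsq_ge0.
  suff -> : \sum_i (l * a i - b i) ^+ 2 = l ^+ 2 * A - 2 * l * X + B by [].
  rewrite /A /X /B mulr_sumr mulr_sumr -sumrB -big_split /=.
  by apply: eq_bigr => i _; ring.
have X2 : X ^+ 2 <= A * B.
  have [A00|Anz] := eqVneq A 0.
    have a0 i : a i = 0.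
      have := psumr_eq0P (fun i _ => sqr_ge0 (a i)) A00 (i := i) isT.
      by move/eqP; rewrite sqrf_eq0 => /eqP.
    have -> : X = 0 by rewrite /X big1// => i _; rewrite a0 mul0r.
    by rewrite expr0n /= mulr_ge0.
  have Apos : 0 < A by rewrite lt_def Anz A0.
  have := quad (X / A).
  have -> : (X / A) ^+ 2 * A - 2 * (X / A) * X + B = B - X ^+ 2 / A by field.
  by rewrite subr_ge0 ler_pdivrMr// mulrC.
rewrite /enorm -/A -/B -sqrtrM//; apply: le_trans (ler_norm X) _.
by rewrite -sqrtr_sqr ler_sqrt ?mulr_ge0.
Qed.

Lemma tri a b : enorm (fun i => a i - b i) <= enorm a + enorm b.
Proof.
have h : \sum_i (a i - b i) ^+ 2 <= (enorm a + enorm b) ^+ 2.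
  have c := cs a (fun i => - b i).
  have eb : enorm (fun i => - b i) = enorm b.
    by rewrite /enorm; congr Num.sqrt; apply: eq_bigr => i _; rewrite sqrrN.
  rewrite eb in c.
  have -> : \sum_i (a i - b i) ^+ 2 =
      \sum_i a i ^+ 2 + 2 * \sum_i a i * - b i + \sum_i b i ^+ 2.
    rewrite mulr_sumr -!big_split /=; apply: eq_bigr => i _; ring.
  rewrite sqrrD !enorm_sq.
  have := enorm_ge0 a; have := enorm_ge0 b; nra.
rewrite {1}/enorm -(ger0_norm (addr_ge0 (enorm_ge0 a) (enorm_ge0 b))).
by rewrite -sqrtr_sqr ler_sqrt// sqr_ge0.
Qed.

Lemma geom (C : 'I_n -> R) (Ci Cj mu xw : 'I_n -> R) (sigma Rad t : R) :
  0 < sigma -> 0 <= t -> enorm (fun i => mu i - Ci i) <= Rad ->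
  enorm (fun i => mu i + sigma * xw i - Cj i) <=
    enorm (fun i => mu i + sigma * xw i - Ci i) ->
  \sum_i (Cj i - Ci i) * xw i <= enorm (fun i => Cj i - Ci i) * t ->
  enorm (fun i => mu i - Cj i) <= Rad + 2 * sigma * t.
Proof.
move=> s0 t0 hr hv hx.
set D := enorm (fun i => mu i - Cj i).
set r := enorm (fun i => mu i - Ci i).
set s := enorm (fun i => Cj i - Ci i).
have D0 : 0 <= D by exact: enorm_ge0.
have r0 : 0 <= r by exact: enorm_ge0.
have s0' : 0 <= s by exact: enorm_ge0.
have key : D ^+ 2 <= r ^+ 2 + 2 * sigma * \sum_i (Cj i - Ci i) * xw i.
  rewrite /D /r !enorm_sq.
  move: hv; rewrite /enorm ler_sqrt ?sumsq_ge0// => hv.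
  have e : \sum_i (mu i + sigma * xw i - Ci i) ^+ 2 -
           \sum_i (mu i + sigma * xw i - Cj i) ^+ 2 =
      \sum_i (mu i - Ci i) ^+ 2 + 2 * sigma * \sum_i (Cj i - Ci i) * xw i -
      \sum_i (mu i - Cj i) ^+ 2.
    rewrite -sumrB mulr_sumr -big_split /= -sumrB.
    by apply: eq_bigr => i _; ring.
  move: hv; rewrite -subr_ge0 e subr_ge0 => //.
have sle : s <= r + D.
  have -> : s = enorm (fun i => (mu i - Ci i) - (mu i - Cj i)).
    by rewrite /s; congr enorm; apply/funext => i; ring.
  exact: tri.
have q0 : 0 <= sigma * t by rewrite mulr_ge0// ltW.
have key2 : D ^+ 2 <= r ^+ 2 + 2 * (sigma * t) * (r + D).
  have h1 : \sum_i (Cj i - Ci i) * xw i <= (r + D) * t.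
    exact: (le_trans hx (ler_wpM2r t0 sle)).
  have h2 : 2 * sigma * \sum_i (Cj i - Ci i) * xw i <= 2 * sigma * ((r + D) * t).
    by apply: ler_wpM2l => //; rewrite mulr_ge0// ltW.
  lra.
suff H : D <= r + 2 * (sigma * t).
  by apply: (le_trans H); rewrite mulrA lerD2r; exact: hr.
have := key2; nra.
Qed.
End geom.

Unset Implicit Arguments.
Theorem lemma5p2 (R : realType) (n k : nat) (C : 'I_k -> ('I_n -> R))
  (cell : ('I_n -> R) -> 'I_k) (sigma Rad eps : R) (mu : 'I_n -> R)
  (d : measure_display) (T : measurableType d) (P : probability T R)
  (xi : 'I_n -> {RV P >-> R}) :
  voronoi_assignment C cell ->
  0 < sigma -> 0 <= Rad -> 0 < eps < 1 ->
  (exists i : 'I_k, enorm (fun t => mu t - C i t) <= Rad) ->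
  std_gaussian_vector xi ->
  let Y := fun (w : T) (t : 'I_n) => mu t + sigma * xi t w in
  exists A : set T, [/\ measurable A, ((1 - eps)%:E <= P A)%E &
    A `<=` [set w | enorm (fun t => mu t - C (cell (Y w)) t)
                    <= 3 * Rad + 2 * Num.sqrt 2 * sigma * Num.sqrt (ln (k%:R / eps))]].
Proof.
move=> HV s0 R0 /andP[e0 e1] [i0 Hi0] Hg Y.
have k0 : (0 < k)%N by case: i0 {Hi0} => i /= ik; exact: leq_ltn_trans (leq0n i) ik.
have kR : 0 < k%:R :> R by rewrite ltr0n.
set L := ln (k%:R / eps).
have kpos : 0 < k%:R / eps by rewrite divr_gt0.
have L0 : 0 <= L.
  apply: ln_ge0; rewrite ler_pdivlMr// mul1r.
  apply: (le_trans (ltW e1)); rewrite ler1n //.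
set t := Num.sqrt (2 * L).
have t0 : 0 <= t by exact: sqrtr_ge0.
pose v (j : 'I_k) := fun x => C j x - C i0 x.
pose sj (j : 'I_k) := enorm (v j).
pose u (j : 'I_k) := fun x => v j x / sj j.
have u1 j : \sum_i u j i ^+ 2 <= 1.
  rewrite /u; under eq_bigr do rewrite expr_div_n.
  rewrite -mulr_suml -enorm_sq -/(sj j).
  have [->|nz] := eqVneq (sj j) 0; first by rewrite expr0n /= invr0 mulr0 ler01.
  by rewrite divff// sqrf_eq0.
pose A := \bigcap_(j in [set: 'I_k]) (lin xi (u j) @^-1` `]-oo, t]).
have mAj j : measurable (lin xi (u j) @^-1` `]-oo, t]).
  by rewrite -[_ @^-1` _]setTI; apply: meas_lin.
have mA : measurable A.
  by apply: fin_bigcap_measurable => [|j _]; [exact: finite_finset|exact: mAj].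
exists A; split => //.
- have et : expR (- (t ^+ 2 / 2)) = eps / k%:R.
    rewrite /t sqr_sqrtr ?mulr_ge0//.
    have -> : 2 * L / 2 = L by field.
    by rewrite expRN lnK ?posrE// invf_div.
  have PAc : (P (~` A) <= eps%:E)%E.
    rewrite /A setC_bigcap.
    have mU : measurable (\bigcup_(j in [set: 'I_k]) ~` (lin xi (u j) @^-1` `]-oo, t])).
      by apply: fin_bigcup_measurable => [|j _]; [exact: finite_finset|apply: measurableC; exact: mAj].
    apply: le_trans.
      apply: (@content_sub_fsum _ _ _ P _ [set: 'I_k] _ (fun j => ~` (lin xi (u j) @^-1` `]-oo, t])) finite_finset _ mU).
      + by move=> j _; apply: measurableC; exact: mAj.
      + by move=> x hx.
    apply: le_trans; first apply: (lee_fsum finite_finset (b := fun=> (eps / k%:R)%:E)).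
      by move=> j _; rewrite -et; exact: tail_bound.
    rewrite (fsbigE (index_enum 'I_k)); last 3 first.
    - exact: index_enum_uniq.
    - exact: subsetT.
    - by move=> j _; rewrite mem_index_enum.
    rewrite sumEFin lee_fin.
    under eq_bigl do rewrite in_setT.
    rewrite sumr_const card_ord.
    have -> : eps / k%:R *+ k = eps / k%:R * k%:R by rewrite mulr_natr.
    by rewrite divfK // gt_eqF.
  have := probability_setC P mA.
  move: PAc; rewrite -(fineK (fin_num_measure P _ mA)) -(fineK (fin_num_measure P _ (measurableC mA))).
  move=> h1 h2; move: h1; rewrite h2 -EFinB !lee_fin; lra.
- move=> w Aw /=.
  set j := cell (Y w).
  have Ajw : lin xi (u j) w <= t.
    by have := Aw j I; rewrite /= in_itv /=.
  have vsum : \sum_i (C j i - C i0 i) * xi i w = sj j * lin xi (u j) w.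
    rewrite /lin mulr_sumr; apply: eq_bigr => i _; rewrite mulrA; congr (_ * _).
    have [e|nz] := eqVneq (sj j) 0.
      by rewrite e mul0r; exact: (enorm0 e).
    by rewrite /u mulrC divfK.
  apply: le_trans.
    apply: (@geom R n (C i0) (C i0) (C j) mu (fun i => xi i w) sigma Rad t) => //.
    - by rewrite vsum; apply: ler_wpM2l => //; exact: enorm_ge0.
  rewrite /t sqrtrM//.
  have := sqrtr_ge0 (2 : R); have := sqrtr_ge0 L; nra.
Qed.
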